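(* Let $(X,\pi)$ be a finite symmetric two-player game with relative payoff game $(X,\Delta)$. If $\Delta$ is quasiconcave, then imitation is not subject to a money pump.
   Context: $\pi(x,y)$ is the payoff of the player choosing $x$ against $y$; $\Delta(x,y)=\pi(x,y)-\pi(y,x)$. $\Delta$ is quasiconcave (single-peaked) if there is a total order $\le$ on $X$ such that for each $y\in X$ the function $x\mapsto\Delta(x,y)$ is weakly increasing up to some $k_y\in X$ and weakly decreasing from $k_y$ on. Imitate-the-best: given initial $y_0\in X$ and any opponent sequence $(x_t)_{t\ge0}$, $y_t=x_{t-1}$ if $\Delta(x_{t-1},y_{t-1})>0$ and $y_t=y_{t-1}$ otherwise. Imitation is not subject to a money pump if there is $M\in\mathbb{R}_+$ such that for every $y_0\in X$ and every sequence $(x_t)$, $\limsup_{T\to\infty}\sum_{t=0}^T\Delta(x_t,y_t)\le M$. *)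

(* Defs.v *)
From HB Require Import structures.
From mathcomp Require Import all_boot all_order all_algebra.
From mathcomp Require Import all_classical all_reals all_analysis.
Set Implicit Arguments. Unset Strict Implicit. Unset Printing Implicit Defensive.
Import Order.TTheory GRing.Theory Num.Theory.
Local Open Scope ring_scope.

Definition relpay {R : realType} {X : Type} (pi : X -> X -> R) (x y : X) : R :=
  pi x y - pi y x.

Definition total_order {X : Type} (le : X -> X -> Prop) : Prop :=
  (forall x, le x x) /\
  (forall x y, le x y -> le y x -> x = y) /\
  (forall x y z, le x y -> le y z -> le x z) /\
  (forall x y, le x y \/ le y x).

(* Delta is quasiconcave (single-peaked): there is a total order on X such that
   for every y, x |-> Delta(x,y) is weakly increasing up to some k_y and weakly
   decreasing from k_y on. *)
Definition quasiconcave {R : realType} {X : Type} (D : X -> X -> R) : Prop :=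
  exists le : X -> X -> Prop, total_order le /\
    forall y, exists k : X,
      (forall x1 x2, le x1 x2 -> le x2 k -> D x1 y <= D x2 y) /\
      (forall x1 x2, le k x1 -> le x1 x2 -> D x2 y <= D x1 y).

Fixpoint imitate {R : realType} {X : Type} (D : X -> X -> R) (y0 : X)
  (x : nat -> X) (t : nat) : X :=
  match t with
  | 0 => y0
  | t'.+1 => let yp := imitate D y0 x t' in
             if 0 < D (x t') yp then x t' else yp
  end.

Definition cum_relpay {R : realType} {X : Type} (D : X -> X -> R) (y0 : X)
  (x : nat -> X) (T : nat) : \bar R :=
  ((\sum_(0 <= t < T.+1) D (x t) (imitate D y0 x t))%R)%:E.

Definition no_money_pump {R : realType} {X : Type} (D : X -> X -> R) : Prop :=
  exists M : R, 0 <= M /\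
    forall (y0 : X) (x : nat -> X),
      (limn_esup (cum_relpay D y0 x) <= M%:E)%E.

(* Main.v *)
Require Import Defs.
From HB Require Import structures.
From mathcomp Require Import all_boot all_order all_algebra.
From mathcomp Require Import all_classical all_reals all_analysis.
Set Implicit Arguments. Unset Strict Implicit. Unset Printing Implicit Defensive.
Import Order.TTheory GRing.Theory Num.Theory.
Local Open Scope ring_scope.

Section Main.
Local Open Scope ring_scope.
Variables (R : realType) (X : finType) (D : X -> X -> R).
Hypothesis Danti : forall x y, D x y = - D y x.
Variable le : X -> X -> Prop.
Hypothesis tot : total_order le.
Hypothesis sp : forall y, exists k : X,
      (forall x1 x2, le x1 x2 -> le x2 k -> D x1 y <= D x2 y) /\
      (forall x1 x2, le k x1 -> le x1 x2 -> D x2 y <= D x1 y).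

Lemma Dxx x : D x x = 0.
Proof. by have := Danti x x; move/eqP; rewrite -addr_eq0 -mulr2n mulrn_eq0 /= => /eqP. Qed.

Lemma btw x1 x2 x3 y : le x1 x2 -> le x2 x3 ->
  D x1 y <= D x2 y \/ D x3 y <= D x2 y.
Proof.
move=> h12 h23; have [k [Hi Hd]] := sp y.
case: tot => _ [_ [_ T]].
by case: (T x2 k) => h; [left; apply: Hi | right; apply: Hd].
Qed.

Lemma key l h a b : le l a -> le a h -> le l b -> le b h ->
  0 < D l a -> 0 < D h b -> False.
Proof.
move=> la ah lb bh Dla Dhb.
have Dbh : D b h < 0 by rewrite Danti oppr_lt0.
have Dal : D a l < 0 by rewrite Danti oppr_lt0.
case: tot => _ [_ [_ T]].
case: (T a b) => [ab|ba].
- case: (btw h ab bh) => H.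
  + have Dha : 0 < D h a by rewrite Danti oppr_gt0; apply: le_lt_trans H Dbh.
    case: (btw a la ah) => H'.
    * by move: (lt_le_trans Dla H'); rewrite Dxx ltxx.
    * by move: (lt_le_trans Dha H'); rewrite Dxx ltxx.
  + by move: (le_lt_trans H Dbh); rewrite Dxx ltxx.
- have Dah : 0 <= D a h.
    case: (btw a la ah) => H'.
    * by move: (lt_le_trans Dla H'); rewrite Dxx ltxx.
    * by rewrite Danti oppr_ge0 -(Dxx a).
  have Dbl : 0 <= D b l.
    case: (btw b lb bh) => H'.
    * by rewrite Danti oppr_ge0 -(Dxx b).
    * by move: (lt_le_trans Dhb H'); rewrite Dxx ltxx.
  have Dlh : D l h < 0.
    case: (btw h lb ba) => H.
    * exact: le_lt_trans H Dbh.
    * by move: (le_lt_trans Dah (le_lt_trans H Dbh)); rewrite ltxx.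
  have Dhl : D h l < 0.
    case: (btw l ba ah) => H.
    * by move: (le_lt_trans Dbl (le_lt_trans H Dal)); rewrite ltxx.
    * exact: le_lt_trans H Dal.
  by move: Dhl; rewrite Danti oppr_lt0 => /(lt_trans Dlh); rewrite ltxx.
Qed.

Lemma seq_min (s : seq X) x0 : x0 \in s ->
  exists2 l, l \in s & forall x, x \in s -> le l x.
Proof.
case: tot => Rf [_ [Tr T]].
elim: s x0 => // y s IH x0 _.
case: s IH => [|z s] IH.
  by exists y; rewrite ?mem_seq1 // => x; rewrite mem_seq1 => /eqP ->.
have [l ls Hl] := IH z (mem_head _ _).
case: (T y l) => yl.
- exists y; first exact: mem_head.
  move=> x; rewrite inE => /orP [/eqP -> // | /Hl]; exact: Tr.
- exists l; first by rewrite inE ls orbT.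
  by move=> x; rewrite inE => /orP [/eqP -> // | /Hl].
Qed.

Lemma seq_max (s : seq X) x0 : x0 \in s ->
  exists2 h, h \in s & forall x, x \in s -> le x h.
Proof.
case: tot => Rf [_ [Tr T]].
elim: s x0 => // y s IH x0 _.
case: s IH => [|z s] IH.
  by exists y; rewrite ?mem_seq1 // => x; rewrite mem_seq1 => /eqP ->.
have [l ls Hl] := IH z (mem_head _ _).
case: (T y l) => yl.
- exists l; first by rewrite inE ls orbT.
  by move=> x; rewrite inE => /orP [/eqP -> // | /Hl].
- exists y; first exact: mem_head.
  move=> x; rewrite inE => /orP [/eqP -> // | /Hl] ?; exact: Tr yl.
Qed.

Lemma peel n : forall S : {set X}, #|S| = n ->
  exists phi : X -> nat, forall a b, a \in S -> b \in S -> 0 < D a b ->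
    (phi b < phi a)%N.
Proof.
elim: n => [|n IH] S cS.
  by exists (fun _ => 0%N) => a b; move: cS => /eqP; rewrite cards_eq0 => /eqP ->; rewrite inE.
have [x0 x0S] : exists x0, x0 \in S.
  by apply/set0Pn; rewrite -card_gt0 cS.
have x0e : x0 \in enum S by rewrite mem_enum.
have [l lS Hl] := seq_min x0e.
have [h hS Hh] := seq_max x0e.
rewrite mem_enum in lS; rewrite mem_enum in hS.
have [e [eS He]] : exists e, e \in S /\ forall b, b \in S -> D e b <= 0.
  case: (boolP [forall b in S, D l b <= 0]) => [/forall_inP H | /forall_inPn [a aS Ha]].
    by exists l.
  exists h; split => // b bS; rewrite leNgt; apply/negP => Hb.
  rewrite -ltNge in Ha.
  apply: (@key l h a b) => //; [apply: Hl|apply: Hh|apply: Hl|apply: Hh];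
    by rewrite mem_enum.
have cS' : #|S :\ e| = n by move: cS; rewrite (cardsD1 e) eS add1n => -[].
have [phi Hphi] := IH (S :\ e) cS'.
exists (fun x => if x == e then 0%N else (phi x).+1) => a b aS bS Dab.
have ae : a != e by apply/eqP => E; move: (He b bS); rewrite -E leNgt Dab.
rewrite (negPf ae); case: eqP => // /eqP be; rewrite ltnS.
apply: Hphi => //; rewrite !inE ?ae ?be ?aS ?bS //.
Qed.

End Main.

Lemma term_le_sum (R : realType) (X : finType) (F : X -> R) a :
  (forall i, 0 <= F i) -> F a <= \sum_i F i.
Proof. by move=> H; rewrite (bigD1 a) //= lerDl sumr_ge0. Qed.

Theorem proposition5 (R : realType) (X : finType) (pi : X -> X -> R) :
  quasiconcave (relpay pi) -> no_money_pump (relpay pi).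
Proof.
move=> [le [tot sp]].
set D := relpay pi.
have Danti : forall x y, D x y = - D y x by move=> x y; rewrite /D /relpay opprB.
have [phi Hphi] := peel Danti tot sp (S := [set: X]) (erefl _).
set N := (\max_(x : X) phi x)%N.
set C := (\sum_(a : X) \sum_(b : X) `|D a b|) : R.
have C0 : 0 <= C by rewrite sumr_ge0 // => a _; rewrite sumr_ge0.
have DC : forall a b, D a b <= C.
  move=> a b; apply: (le_trans (ler_norm _)).
  apply: (le_trans (term_le_sum (F := fun b => `|D a b|) b _)) => //.
  by apply: (term_le_sum (F := fun a => \sum_b `|D a b|)) => i; rewrite sumr_ge0.
exists (C * N%:R); split; first by rewrite mulr_ge0.
move=> y0 x.
have bnd : forall n, \sum_(0 <= t < n) D (x t) (imitate D y0 x t)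
                      <= C * (phi (imitate D y0 x n))%:R.
  elim=> [|n IHn]; first by rewrite big_geq // mulr_ge0.
  rewrite big_nat_recr //= /=.
  case: ifP => H.
  - have Hp := Hphi _ _ (finset.in_setT _) (finset.in_setT _) H.
    apply: (le_trans (lerD IHn (DC _ _))).
    rewrite -[X in _ + X <= _](mulr1 C) -mulrDr ler_wpM2l // natr1 ler_nat.
    exact: Hp.
  - by rewrite -[X in _ <= X]addr0 lerD // leNgt H.
have bndT : forall T, (cum_relpay D y0 x T <= (C * N%:R)%:E)%E.
  move=> T; rewrite /cum_relpay lee_fin; apply: (le_trans (bnd T.+1)).
  by rewrite ler_wpM2l // ler_nat; apply: leq_bigmax.
rewrite limn_esup_lim.
apply: (@lime_le _ _ _ _ (C * N%:R)%:E (esups (cum_relpay D y0 x))).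
  exact: is_cvg_esups.
apply: nearW => n.
rewrite /esups /=.
apply: ge_ereal_sup => z [m _ <-].
exact: bndT.
Qed.
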